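(* Let $1\le p<\infty$, $\Omega=\mathbb K^{\mathbb Z_+}$, let $\mu=\bigotimes_{n\ge0}\mu_n$ be a product of Borel probability measures on $\mathbb K$, and let $\mathbf w$ be a sequence of non-zero scalars with $\sum_{n=1}^\infty\frac1{|w_1\cdots w_n|^p}<\infty$. If $\mu$ is $B_{\mathbf w}$-invariant and $\int_{\mathbb K}|t|^p\,d\mu_0(t)<\infty$, then $\mu(\ell_p(\mathbb Z_+))=1$.
   Context: $\mathbb K\in\{\mathbb R,\mathbb C\}$; $\Omega$ has the product topology and Borel $\sigma$-algebra, and $\ell_p(\mathbb Z_+)$ is a Borel subset of it. $B_{\mathbf w}:\Omega\to\Omega$ is $(B_{\mathbf w}t)_j=w_{j+1}t_{j+1}$; invariance means $\mu(B_{\mathbf w}^{-1}B)=\mu(B)$ for Borel $B$. *)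

(* Defs.v *)
From HB Require Import structures.
From mathcomp Require Import all_boot all_order all_algebra.
From mathcomp Require Import all_classical all_reals all_analysis.
From mathcomp Require Export complex.

Set Implicit Arguments.
Unset Strict Implicit.
Unset Printing Implicit Defensive.

Import Order.TTheory GRing.Theory Num.Theory.
Local Open Scope classical_set_scope.
Local Open Scope ring_scope.

(* The scalar field K (= R or C) as a pointed ring, so that measurable
   structures can be built on it and on K^nat. *)
Definition ptd (K : Type) : Type := K.
HB.instance Definition _ (K : nzRingType) := GRing.NzRing.on (ptd K).
HB.instance Definition _ (K : nzRingType) := isPointed.Build (ptd K) 0.

Section defs.
Context (R : realType) (K : nzRingType) (nrm : K -> R).

Definition openballs : set (set (ptd K)) :=
  [set B | exists (c : K) (r : R), B = [set z : ptd K | nrm (z - c) < r]].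

(* The Borel measurable space on K: sigma-algebra generated by open balls
   (for K = R or C, separable metric spaces, this is the Borel sigma-algebra). *)
Definition BorelK : Type := g_sigma_algebraType openballs.

Definition Omega0 : Type := nat -> ptd K.

Definition cylinders : set (set Omega0) :=
  [set S | exists (n : nat) (A : set (ptd K)),
     <<s openballs >> A /\ S = [set t : Omega0 | A (t n)]].

(* Omega with the product sigma-algebra (= Borel sigma-algebra of the product
   topology, K being second countable). *)
Definition Omega : Type := g_sigma_algebraType cylinders.

Definition is_product_measure (mu : probability Omega R)
    (mun : nat -> probability BorelK R) : Prop :=
  forall (n : nat) (A : nat -> set BorelK),
    (forall i, (i < n)%N -> measurable (A i)) ->
    mu [set t : Omega | forall i, (i < n)%N -> A i (t i)] =
      (\prod_(i < n) mun i (A i))%E.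

Definition Bw (w : nat -> K) (t : Omega) : Omega :=
  fun j => (w j.+1 * t j.+1 : ptd K).

Definition shift_invariant (w : nat -> K) (mu : probability Omega R) : Prop :=
  forall B : set Omega, measurable B -> mu (Bw w @^-1` B) = mu B.

Definition lp (p : R) : set Omega :=
  [set t | (\sum_(0 <= n <oo) ((nrm (t n)) `^ p)%:E < +oo)%E].

Definition corollary_statement : Prop :=
  forall (p : R) (mun : nat -> probability BorelK R)
         (mu : probability Omega R) (w : nat -> K),
    1 <= p ->
    is_product_measure mu mun ->
    (forall n, (0 < n)%N -> w n != 0) ->
    (\sum_(1 <= n <oo) (((nrm (\prod_(1 <= i < n.+1) w i)) `^ p)^-1)%:E < +oo)%E ->
    shift_invariant w mu ->
    (\int[mun 0%N]_(t in [set: BorelK]) ((nrm t) `^ p)%:E < +oo)%E ->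
    mu (lp p) = 1%E.

End defs.

(* Main.v *)
Require Import Defs.
From HB Require Import structures.
From mathcomp Require Import all_boot all_order all_algebra.
From mathcomp Require Import all_classical all_reals all_analysis.
From mathcomp Require Import complex.
From mathcomp Require Import measurable_realfun lebesgue_integral.
Set Implicit Arguments.
Unset Strict Implicit.
Unset Printing Implicit Defensive.
Import Order.TTheory GRing.Theory Num.Theory.
Local Open Scope classical_set_scope.
Local Open Scope ring_scope.

Section gen.
Context (R : realType) (K : fieldType) (nrm : K -> R).
Hypothesis nrm_ge0 : forall z, 0 <= nrm z.
Hypothesis nrmM : forall a b, nrm (a * b) = nrm a * nrm b.
Hypothesis nrm_eq0 : forall z, nrm z = 0 -> z = 0.

Local Notation BK := (@BorelK R K nrm).
Local Notation OM := (@Omega R K nrm).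

Lemma nrm_gt0 (c : K) : c != 0 -> 0 < nrm c.
Proof.
move=> c0; rewrite lt_def nrm_ge0 andbT; apply/eqP => /nrm_eq0 /eqP.
by rewrite (negbTE c0).
Qed.

Lemma mcoord n : measurable_fun [set: OM] (fun t : OM => (t n : BK)).
Proof.
move=> _ A mA; rewrite setTI; apply: sub_sigma_algebra.
by exists n, A; split.
Qed.

Lemma mnrm : measurable_fun [set: BK] (nrm : BK -> R).
Proof.
apply: (measurability (@measurable_realfun.RGenInftyO.G R)).
  exact: measurable_realfun.RGenInftyO.measurableE.
move=> _ [_ [x ->] <-]; rewrite setTI.
apply: sub_sigma_algebra; exists 0, x.
by apply/seteqP; split => z /=; rewrite subr0 in_itv/=.
Qed.

Lemma mscale (c : K) : c != 0 -> measurable_fun [set: BK] (fun z : BK => (c * z : BK)).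
Proof.
move=> c0; have := (@measurability _ _ BK BK [set: BK] (fun z : BK => (c * z : BK)) (openballs nrm)); apply => //.
move=> _ [_ [d [r ->]] <-]; rewrite setTI.
apply: sub_sigma_algebra; exists (d / c), (r / nrm c).
apply/seteqP; split => z /=.
  have -> : c * z - d = c * (z - d / c) by rewrite mulrBr mulrCA divff// mulr1.
  by rewrite nrmM ltr_pdivlMr ?nrm_gt0// mulrC.
have -> : c * z - d = c * (z - d / c) by rewrite mulrBr mulrCA divff// mulr1.
by rewrite nrmM ltr_pdivlMr ?nrm_gt0// mulrC.
Qed.

Lemma mBw (w : nat -> K) : (forall n, (0 < n)%N -> w n != 0) ->
  measurable_fun [set: OM] (@Bw R K nrm w).
Proof.
move=> w0; have := (@measurability _ _ OM OM [set: OM] (@Bw R K nrm w) (cylinders nrm)); apply => //.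
move=> _ [_ [n [A [mA ->]]] <-]; rewrite setTI.
apply: sub_sigma_algebra; exists n.+1, ((fun z : BK => (w n.+1 * z : BK)) @^-1` A).
split; last by [].
by rewrite -[X in _ X]setTI; apply: (mscale (w0 _ _)).
Qed.


Section main.
Variables (p : R) (mun : nat -> probability BK R) (mu : probability OM R) (w : nat -> K).
Hypothesis p1 : 1 <= p.
Hypothesis hprod : is_product_measure mu mun.
Hypothesis w0 : forall n, (0 < n)%N -> w n != 0.
Hypothesis hinv : shift_invariant w mu.

Definition Wn n : K := \prod_(1 <= i < n.+1) w i.
Definition Y n (t : OM) : BK := (Wn n * t n : K).
Definition g n (t : OM) : \bar R := ((nrm (Y n t)) `^ p)%:E.

Lemma WnS n : Wn n.+1 = Wn n * w n.+1.
Proof. by rewrite /Wn big_nat_recr. Qed.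

Lemma Wn_neq0 n : Wn n != 0.
Proof.
elim: n => [|n IH]; first by rewrite /Wn big_geq// oner_neq0.
by rewrite WnS mulf_neq0// w0.
Qed.

Lemma Y_Bw n t : Y n (Bw w t) = Y n.+1 t.
Proof. by rewrite /Y /Bw WnS mulrA. Qed.

Lemma mY n : measurable_fun [set: OM] (Y n).
Proof.
exact: (measurableT_comp (mscale (Wn_neq0 n)) (mcoord n)).
Qed.

Lemma mg n : measurable_fun [set: OM] (fun t : OM => g n t).
Proof.
apply/measurable_EFinP.
exact: (measurableT_comp (measurable_powR p) (measurableT_comp mnrm (mY n))).
Qed.

Lemma g_ge0 n t : (0 <= g n t)%E.
Proof. by rewrite lee_fin powR_ge0. Qed.

Lemma int_gS n : (\int[mu]_(t in [set: OM]) g n.+1 t = \int[mu]_(t in [set: OM]) g n t)%E.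
Proof.
transitivity (\int[mu]_(t in (Bw w) @^-1` [set: OM]) g n (Bw w t))%E.
  by rewrite preimage_setT; apply: eq_integral => t _ /=; rewrite /g Y_Bw.
rewrite -(ge0_integral_pushforward (mBw w0) mu measurableT (mg n)); last first.
  by move=> y _; exact: g_ge0.
apply: eq_measure_integral; first exact: (mBw w0).
move=> ? A mA _; rewrite /pushforward; exact: hinv. 
Qed.

Lemma int_gn n : (\int[mu]_(t in [set: OM]) g n t = \int[mu]_(t in [set: OM]) g 0 t)%E.
Proof. by elim: n => // n IH; rewrite int_gS. Qed.


Lemma Wn0 : Wn 0 = 1.
Proof. by rewrite /Wn big_geq. Qed.

Lemma mf : measurable_fun [set: BK] (fun y : BK => ((nrm y) `^ p)%:E).
Proof.
apply/measurable_EFinP.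
exact: (measurableT_comp (measurable_powR p) mnrm).
Qed.

Lemma int_g0 : (\int[mu]_(t in [set: OM]) g 0 t =
   \int[mun 0%N]_(t in [set: BK]) ((nrm t) `^ p)%:E)%E.
Proof.
transitivity (\int[mu]_(t in (fun t : OM => (t 0%N : BK)) @^-1` [set: BK])
   ((nrm (t 0%N : BK)) `^ p)%:E)%E.
  by rewrite preimage_setT; apply: eq_integral => t _; rewrite /g /Y Wn0 mul1r.
rewrite -(ge0_integral_pushforward (mcoord 0) mu measurableT mf); last first.
  by move=> y _; rewrite lee_fin powR_ge0.
apply: eq_measure_integral; first exact: (mcoord 0).
move=> ? A mA _; rewrite /pushforward.
have := @hprod 1%N (fun _ => A) (fun _ _ => mA).
rewrite big_ord1 /= => h; rewrite -h; congr (mu _).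
apply/seteqP; split => t /=.
  by move=> At i; rewrite ltnS leqn0 => /eqP ->.
by move=> /(_ 0%N isT).
Qed.

Definition c n : R := ((nrm (Wn n)) `^ p)^-1.

Lemma int_coord n : (\int[mu]_(t in [set: OM]) ((nrm (t n)) `^ p)%:E =
   (c n)%:E * \int[mun 0%N]_(t in [set: BK]) ((nrm t) `^ p)%:E)%E.
Proof.
rewrite -int_g0 -(int_gn n) -ge0_integralZl_EFin //; first last.
- by rewrite /c invr_ge0 powR_ge0.
- exact: mg.
- by move=> t _; exact: g_ge0.
apply: eq_integral => t _; rewrite /g /c /Y -EFinM nrmM powRM // mulKf //.
by rewrite gt_eqF // powR_gt0 // nrm_gt0 // Wn_neq0.
Qed.

End main.

Lemma gen_cor : corollary_statement nrm.
Proof.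
move=> p mun mu w p1 hprod w0 hsum hinv hint.
have p0 : 0 < p by apply: lt_le_trans p1.
pose F := fun t : OM => (\sum_(0 <= n <oo) ((nrm (t n)) `^ p)%:E)%E.
have mFn n : measurable_fun [set: OM] (fun t : OM => ((nrm (t n)) `^ p)%:E).
  apply/measurable_EFinP.
  exact: (measurableT_comp (measurable_powR p) (measurableT_comp mnrm (mcoord n))).
have mF : measurable_fun [set: OM] F.
  have := @ge0_emeasurable_sum _ _ _ [set: OM] (fun n t => ((nrm (t n)) `^ p)%:E) xpredT.
  by apply => // k x _ _; rewrite lee_fin powR_ge0.
have F0 t : (0 <= F t)%E by apply: nneseries_ge0 => n _; rewrite lee_fin powR_ge0.
set Iint := (\int[mun 0%N]_(t in [set: BK]) ((nrm t) `^ p)%:E)%E in hint.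
have I0 : (0 <= Iint)%E by apply: integral_ge0 => t _; rewrite lee_fin powR_ge0.
have Ifin : Iint \is a fin_num by rewrite ge0_fin_numE.
have c0 n : 0 <= c p w n by rewrite /c invr_ge0 powR_ge0.
have hs : (\sum_(1 <= n <oo) (c p w n)%:E < +oo)%E := hsum.
have intF : (\int[mu]_(t in [set: OM]) F t < +oo)%E.
  rewrite /F integral_nneseries //; last by move=> n t _; rewrite lee_fin powR_ge0.
  have e n : (\int[mu]_(t in [set: OM]) ((nrm (t n)) `^ p)%:E =
      (fine Iint)%:E * (c p w n)%:E)%E.
    by rewrite (int_coord p hprod w0 hinv) fineK // muleC.
  under eq_eseriesr => n _ do rewrite e.
  rewrite nneseriesZl; last by move=> n _; rewrite lee_fin.
  rewrite (nneseries_split 0 1); last by move=> n _; rewrite lee_fin.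
  rewrite add0n big_nat1.
  rewrite -ge0_fin_numE; last first.
    apply: mule_ge0; first by rewrite lee_fin fine_ge0.
    apply: adde_ge0; first by rewrite lee_fin.
    by apply: nneseries_ge0 => n _; rewrite lee_fin.
  apply: fin_numM => //; rewrite fin_numD; apply/andP; split => //.
  by rewrite ge0_fin_numE //; apply: nneseries_ge0 => n _; rewrite lee_fin.
have intF' : mu.-integrable [set: OM] F.
  apply/integrableP; split; first exact: mF.
  by under eq_integral => t _ do rewrite gee0_abs //.
have [N [mN muN sub]] := integrable_ae measurableT intF'.
have mlp : measurable (@lp R K nrm p).
  by have := emeasurable_fun_infty_o measurableT mF +oo%E; rewrite setTI.
apply/eqP; rewrite eq_le probability_le1 //=.
have <- : mu (~` N) = 1%E by rewrite probability_setC // muN sube0.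
apply: le_measure; rewrite ?inE //; first exact: measurableC.
move=> t Nt; apply: contrapT => hlt; apply: Nt; apply: sub => /= /(_ Logic.I) hfin.
have hF : (F t < +oo)%E by rewrite -ge0_fin_numE.
exact: hlt hF.
Qed.

End gen.

Theorem corollary5p4 (R : realType) :
  corollary_statement (fun x : R => `|x|) /\
  corollary_statement (fun z : R[i] => `|z : Rcomplex R|).
Proof.
split.
  apply: (@gen_cor R R (fun x : R => `|x|)) => [z|a b|z /normr0_eq0 //].
    exact: normr_ge0.
  exact: normrM.
apply: (@gen_cor R R[i] (fun z : R[i] => `|z : Rcomplex R|)) => [z|a b|z].
- exact: normr_ge0.
- exact: ComplexField.Normc.normcM.
- exact: ComplexField.Normc.eq0_normc.
Qed.
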